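(* Let $\mathcal{P}$ be a locally geometric poset. If $\mathcal{P}$ has an M-ideal $\mathcal{Q}$ with $\operatorname{rk}(\mathcal{Q})=\operatorname{rk}(\mathcal{P})-1$, then $\mathcal{P}$ is pure, i.e., all maximal elements of $\mathcal{P}$ have the same rank.
   Context: All posets are finite, have a unique minimal element $\hat0$ and are ranked; $\operatorname{rk}$ of a poset is the maximum rank of its elements. $A(\cdot)$ denotes the set of atoms (rank-1 elements). $\bigvee T$ is the set of minimal upper bounds of $T$, $x\vee y=\bigvee\{x,y\}$, and $x\wedge y$ is the meet. A lattice is geometric if $y$ covers $x$ iff there is an atom $a\not\le x$ with $y=x\vee a$; $\mathcal{P}$ is locally geometric if each $\mathcal{P}_{\le x}$ is a geometric lattice. An element $x$ of a geometric lattice $L$ is modular if $x\wedge(y\vee z)=(x\wedge y)\vee z$ for all $z\le x$, $y\in L$. An order ideal is a downward-closed subset; it is pure if all its maximal elements have the same rank and join-closed if $T\subseteq\mathcal{Q}$ implies $\bigvee T\subseteq\mathcal{Q}$. An M-ideal of $\mathcal{P}$ is a pure, join-closed order ideal $\mathcal{Q}$ such that (1) $|a\vee y|\ge1$ for all $y\in\mathcal{Q}$ and $a\in A(\mathcal{P})\setminus A(\mathcal{Q})$, and (2) for every maximal element $x$ of $\mathcal{P}$ there is a maximal element $y$ of $\mathcal{Q}$ that is modular in $\mathcal{P}_{\le x}$. *)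

(* Defs.v *)
From mathcomp Require Import all_boot all_order.
Set Implicit Arguments. Unset Strict Implicit. Unset Printing Implicit Defensive.
Import Order.POrderTheory.
Local Open Scope order_scope.

Section PosetDefs.
Context {d : Order.disp_t} {T : finPOrderType d}.

Definition covers (x y : T) : Prop :=
  x < y /\ forall z, ~ (x < z /\ z < y).

Definition has_bottom : Prop := exists b : T, forall y, b <= y.

Definition is_rank_fun (rk : T -> nat) : Prop :=
  (forall x, rk x = 0 <-> (forall y, x <= y)) /\
  (forall x y, covers x y -> rk y = (rk x).+1).

Definition atom (rk : T -> nat) (a : T) : Prop := rk a = 1.

Definition maximal (x : T) : Prop := forall y, ~ (x < y).

Definition maximal_in (Q : {set T}) (y : T) : Prop :=
  y \in Q /\ forall z, z \in Q -> ~ (y < z).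

Definition rk_poset (rk : T -> nat) : nat := \max_(x : T) rk x.
Definition rk_set (rk : T -> nat) (Q : {set T}) : nat := \max_(x in Q) rk x.

Definition pure (rk : T -> nat) : Prop :=
  forall x y, maximal x -> maximal y -> rk x = rk y.

(* bigvee S: u is a minimal upper bound of S in P *)
Definition upper_bound (S : {set T}) (u : T) : Prop := forall t, t \in S -> t <= u.
Definition min_upper_bound (S : {set T}) (u : T) : Prop :=
  upper_bound S u /\ forall v, upper_bound S v -> ~ (v < u).

Definition is_join_below (x a b j : T) : Prop :=
  [/\ j <= x, a <= j, b <= j &
      forall u, u <= x -> a <= u -> b <= u -> j <= u].
Definition is_meet (a b m : T) : Prop :=
  [/\ m <= a, m <= b & forall u, u <= a -> u <= b -> u <= m].

(* P_{<= x} is a lattice (finite with bottom: binary joins suffice;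
   meets of elements below x are then meets in P) *)
Definition lattice_below (x : T) : Prop :=
  (forall a b, a <= x -> b <= x -> exists j, is_join_below x a b j) /\
  (forall a b, a <= x -> b <= x -> exists m, is_meet a b m).

Definition geometric_below (rk : T -> nat) (x : T) : Prop :=
  lattice_below x /\
  forall y z, y <= x -> z <= x ->
    (covers y z <-> exists a, [/\ atom rk a, a <= x, ~~ (a <= y) &
                                  is_join_below x y a z]).

Definition locally_geometric (rk : T -> nat) : Prop :=
  forall x, geometric_below rk x.

(* y is a modular element of the geometric lattice P_{<= x}:
   y /\ (w \/ z) = (y /\ w) \/ z for all z <= y and w in P_{<= x}. *)
Definition modular_below (x y : T) : Prop :=
  y <= x /\
  forall z w, z <= y -> w <= x ->
    forall j m m' r, is_join_below x w z j -> is_meet y j m ->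
      is_meet y w m' -> is_join_below x m' z r -> m = r.

Definition order_ideal (Q : {set T}) : Prop :=
  forall x y, y \in Q -> x <= y -> x \in Q.

Definition pure_set (rk : T -> nat) (Q : {set T}) : Prop :=
  forall x y, maximal_in Q x -> maximal_in Q y -> rk x = rk y.

Definition join_closed (Q : {set T}) : Prop :=
  forall S : {set T}, S \subset Q -> forall u, min_upper_bound S u -> u \in Q.

Definition M_ideal (rk : T -> nat) (Q : {set T}) : Prop :=
  [/\ order_ideal Q, pure_set rk Q, join_closed Q,
      (forall y a, y \in Q -> atom rk a -> a \notin Q ->
         exists u, min_upper_bound [set a; y] u) &
      (forall x, maximal x ->
         exists y, maximal_in Q y /\ modular_below x y)].

End PosetDefs.

(* Main.v *)
Require Import Defs.
From mathcomp Require Import all_boot all_order.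
From mathcomp Require Import zify.

Section Helpers.
Import Order.POrderTheory.
Local Open Scope order_scope.
Context {d : Order.disp_t} {T : finPOrderType d}.

Lemma cover_exists {v z : T} : v < z -> exists w, covers v w /\ w <= z.
Proof.
move=> vz.
pose P := fun w : T => (v < w) && (w <= z).
have Pz : P z by rewrite /P vz lexx.
case: (arg_minnP (fun w : T => #|[set u : T | u < w]|) Pz) => w /andP[vw wz] Hmin.
exists w; split => //; split => // u [vu uw].
have Pu : P u by rewrite /P vu (le_trans (ltW uw) wz).
have := Hmin u Pu.
have : [set u0 : T | u0 < u] \proper [set u0 : T | u0 < w].
  apply/properP; split.
    by apply/subsetP => t; rewrite !inE => tu; apply: lt_trans tu uw.
  by exists u; rewrite !inE ?ltxx.
move/proper_card.
move=> H1 H2; have := leq_ltn_trans H2 H1; by rewrite ltnn.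
Qed.

Lemma rk_lt {rk : T -> nat} (Hr : is_rank_fun rk) {x y : T} : x < y -> (rk x < rk y)%N.
Proof.
move=> xy.
move: (leqnn #|[set u : T | (x < u)%O]|).
move: {2}#|_| => n.
elim: n x xy => [|n IH] x xy Hn.
  have : (0 < #|[set u : T | (x < u)%O]|)%N by apply/card_gt0P; exists y; rewrite inE.
  by rewrite lt0n -leqn0 Hn.
have [w [cw wy]] := cover_exists xy.
have Hw := Hr.2 _ _ cw.
move: wy; rewrite le_eqVlt => /orP[/eqP <-|wy]; first by rewrite Hw.
have Hp : [set u : T | (w < u)%O] \proper [set u : T | (x < u)%O].
  apply/properP; split.
    by apply/subsetP => t; rewrite !inE => tu; apply: lt_trans tu; case: cw.
  by exists w; rewrite !inE ?ltxx; case: cw.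
have Hc : (#|[set u : T | (w < u)%O]| <= n)%N by have := proper_card Hp; lia.
have := IH w wy Hc; rewrite Hw; lia.
Qed.

End Helpers.

Theorem lemma4p1 (d : Order.disp_t) (T : finPOrderType d) (rk : T -> nat)
  (Q : {set T}) :
  has_bottom (T := T) -> is_rank_fun rk ->
  locally_geometric rk ->
  M_ideal rk Q -> rk_set rk Q = rk_poset rk - 1 ->
  pure rk.
Proof.
move=> _ Hr Hgeo [Hoi Hpure Hjc Hat Hmod] Hrk.
set r := rk_poset rk in Hrk.
have rkle : forall t, rk t <= r by move=> t; apply: leq_bigmax.
suff claim : forall x, maximal x -> rk x = r.
  by move=> x x' Mx Mx'; rewrite !claim.
move=> x Mx.
have [y [[yQ ymax] [yx _]]] := Hmod x Mx.
have [y0 y0Q Hy0] := @eq_bigmax_cond _ (mem Q) rk (introT card_gt0P (ex_intro _ y yQ)).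
have y0max : maximal_in Q y0.
  split => // z zQ y0z; have := rk_lt Hr y0z.
  have := @leq_bigmax_cond _ (mem Q) rk z zQ.
  rewrite Hy0; lia.
have rky : rk y = r - 1.
  rewrite (Hpure _ _ (conj yQ ymax) y0max) -Hrk /rk_set Hy0 //.
move: yx; rewrite Order.POrderTheory.le_eqVlt => /orP[/eqP eyx | ltyx]; last first.
  have := rk_lt Hr ltyx; have := rkle x; lia.
subst y.
case: (eqVneq (rk x) r) => // rkx.
exfalso.
have [z Hz] := @eq_bigmax T rk (introT card_gt0P (ex_intro _ x isT)).
have zQ : z \notin Q.
  apply/negP => zQ.
  have h1 : rk z <= rk_set rk Q := @leq_bigmax_cond _ (mem Q) rk z zQ.
  have h2 : rk z = r by rewrite -Hz.
  move: rkx; rewrite rky; lia.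
pose S := [set a : T | (rk a == 1) && (a <= z)%O].
case: (boolP (S \subset Q)) => [SQ | /subsetPn [a aS aQ]].
  apply/negP: zQ; apply/negPn; apply: (Hjc S SQ).
  split.
    by move=> t; rewrite inE => /andP[].
  move=> v Hv vz.
  have [w [cw wz]] := cover_exists vz.
  have [_ Hg] := Hgeo z.
  have [a [aat az anv _]] := (Hg v w (Order.POrderTheory.ltW vz) wz).1 cw.
  have : a \in S by rewrite inE az andbT; apply/eqP.
  by move/Hv; apply/negP.
move: aS; rewrite inE => /andP[/eqP aat az].
have [u [Hu _]] := Hat x a yQ aat aQ.
have xu : (x <= u)%O by apply: Hu; rewrite !inE eqxx orbT.
have au : (a <= u)%O by apply: Hu; rewrite !inE eqxx.
move: xu; rewrite Order.POrderTheory.le_eqVlt => /orP[/eqP exu | xu]; last by case: (Mx u).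
subst u.
by move: aQ; rewrite (Hoi a x yQ au).
Qed.
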